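(* Let $G$ be a structured single-touch computation DAG, and consider its sequential execution (one processor, parsimonious work stealing, future thread first at every fork). Then for every touch $x$ in $G$, with corresponding fork $v$: (i) the future parent of $x$ is executed before the local parent of $x$; and (ii) the right child of $v$ is the node executed immediately after the future parent of $x$.
   Context: Computation model. A future-parallel computation is a finite DAG whose nodes are tasks. Every node has in-degree and out-degree in $\{1,2\}$, except a distinguished root node (in-degree $0$) and a distinguished final node (out-degree $0$). Edges are of three types: continuation edges, future edges and touch edges. A thread is a maximal chain of nodes connected by continuation edges. The main thread begins at the root and ends at the final node. Every other thread $t$ begins at a node with an incoming future edge from a node $v$ of another thread $t'$; then $v$ is the fork of $t$, $t'$ is the parent thread of $t$, and $t$ is the future thread at $v$. A fork $v$ has two children: the first node of $t$ (the left child) and the continuation successor of $v$ in $t'$ (the right child); both have in-degree $1$ and are not touches. The last node of every non-main thread has exactly one outgoing edge, which is a touch edge into another thread. If there is a touch edge from a node $v_1$ of thread $t_1$ to a node $v_2$ of thread $t_2\neq t_1$, and a continuation edge from $u_2$ to $v_2$, then $v_2$ is a touch of $t_1$ (a touch by $t_2$, i.e. it lies in $t_2$), $v_1$ is its future parent, $u_2$ its local parent, $t_1$ its future thread, and the fork of $t_1$ is its corresponding fork. A node $w$ is a descendant of a node $u$ if there is a directed path from $u$ to $w$. A DAG is a structured future-parallel computation if for the future thread $t$ of any fork $v$: (1) the local parents of the touches of $t$ are descendants of $v$, and (2) at least one touch of $t$ is a descendant of the right child of $v$. It is a structured single-touch computation if, in addition, each future thread $t$ spawned at a fork $v$ has exactly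 one touch, and this touch is a descendant of the right child of $v$ (its future parent is then the last node of $t$). Scheduler. In parsimonious work stealing with $P$ processors, each processor has a deque. A node is ready when all its parents have been executed. After executing a node of out-degree 1, a processor continues with its child if that child is ready. After executing a fork, it pushes one child onto the bottom of its deque and executes the other; ''future thread first'' means it executes the left child (first node of the future thread) and pushes the right child. When a processor has no node to execute, it pops the bottom node of its own deque if nonempty, and otherwise steals the top node of the deque of some other processor. The sequential execution is the execution with $P=1$. *)

(* Defs.v *)
From mathcomp Require Import all_boot.
Set Implicit Arguments. Unset Strict Implicit. Unset Printing Implicit Defensive.

(* Between two given nodes there is at most one edge of each type. *)
Record fcomp (V : finType) := Comp {
  cont : rel V;
  fut  : rel V;
  tch  : rel V;
  root : V;
  final : V }.

Section Defs.
Variables (V : finType) (G : fcomp V).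

Definition edge : rel V := fun u w => [|| cont G u w, fut G u w | tch G u w].

Definition indeg (w : V) : nat :=
  #|[set u | cont G u w]| + #|[set u | fut G u w]| + #|[set u | tch G u w]|.
Definition outdeg (u : V) : nat :=
  #|[set w | cont G u w]| + #|[set w | fut G u w]| + #|[set w | tch G u w]|.

Definition descendant (u w : V) : bool := connect edge u w.

(* threads = maximal chains of continuation edges: two nodes are in the
   same thread iff they are connected by continuation edges *)
Definition cont_sym : rel V := fun u w => cont G u w || cont G w u.
Definition same_thread (u w : V) : bool := connect cont_sym u w.
Definition in_main (u : V) : bool := same_thread (root G) u.
Definition thread_first (x : V) : bool := [forall u, ~~ cont G u x].
Definition thread_last (x : V) : bool := [forall w, ~~ cont G x w].

Definition is_fork (v : V) : bool := [exists f, fut G v f].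

(* x is a touch of the thread containing f, with future parent y and local
   parent u (y lies in that thread, x in a different thread) *)
Definition touch_of (f x : V) : Prop :=
  exists y u, [&& tch G y x, cont G u x, same_thread y f & ~~ same_thread y x].

Definition is_touch (x : V) : bool :=
  [exists y, exists u, [&& tch G y x, cont G u x & ~~ same_thread y x]].

Definition future_parallel : Prop :=
   (forall u w, edge u w -> ~~ connect edge w u) /\
   (forall w, if w == root G then indeg w = 0 else indeg w \in [:: 1; 2]) /\
   (forall u, if u == final G then outdeg u = 0 else outdeg u \in [:: 1; 2]) /\
   (forall u w w', cont G u w -> cont G u w' -> w = w') /\
   (forall u u' w, cont G u w -> cont G u' w -> u = u') /\
   (in_main (final G) /\ thread_last (final G)) /\
   (forall x, thread_first x -> ~~ in_main x ->
      exists v, fut G v x && ~~ same_thread v x) /\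
   (* a fork v has two children: the first node of its future thread (left
      child) and its continuation successor (right child); both have
      in-degree 1 and are not touches *)
   (forall v f, fut G v f -> thread_first f /\
      exists c, [/\ cont G v c, indeg f = 1, indeg c = 1,
                    ~~ is_touch f & ~~ is_touch c]) /\
   (forall y, thread_last y -> ~~ in_main y ->
      outdeg y = 1 /\ exists z, tch G y z && ~~ same_thread y z) /\
   (forall y z, tch G y z -> ~~ in_main y /\ ~~ same_thread y z).

Definition structured : Prop :=
  forall v f c, fut G v f -> cont G v c ->
    (forall x y u, tch G y x -> cont G u x -> same_thread y f ->
        ~~ same_thread y x -> descendant v u) /\
    (exists x, touch_of f x /\ descendant c x).

Definition structured_single_touch : Prop :=
  structured /\
  forall v f c, fut G v f -> cont G v c ->
    exists x, [/\ touch_of f x, descendant c x &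
                  forall x', touch_of f x' -> x' = x].

(* Sequential execution of parsimonious work stealing (P = 1, future thread
   first).  State: (executed nodes in execution order, node currently
   assigned to the processor, deque with its bottom at the head). *)
Definition state := (seq V * option V * seq V)%type.

Definition ready (done : seq V) (c : V) : bool :=
  [forall p, edge p c ==> (p \in done)].

Inductive step : state -> state -> Prop :=
  | step_fork ord x f c dq :
      fut G x f -> cont G x c ->
      step (ord, Some x, dq) (rcons ord x, Some f, c :: dq)
  | step_cont ord x c dq :
      ~~ is_fork x -> edge x c -> ready (rcons ord x) c ->
      step (ord, Some x, dq) (rcons ord x, Some c, dq)
  | step_stop ord x dq :
      ~~ is_fork x -> (forall c, edge x c -> ~~ ready (rcons ord x) c) ->
      step (ord, Some x, dq) (rcons ord x, None, dq)
  | step_pop ord y dq :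
      step (ord, None, y :: dq) (ord, Some y, dq).

Inductive steps : state -> state -> Prop :=
  | steps_refl s : steps s s
  | steps_cons s1 s2 s3 : step s1 s2 -> steps s2 s3 -> steps s1 s3.

(* [ord] is the sequential execution order: the run starting with the root
   terminates (no node to execute, empty deque; with P = 1 there is nobody
   to steal from) after executing the nodes of [ord] in this order. *)
Definition seq_execution (ord : seq V) : Prop :=
  steps ([::], Some (root G), [::]) (ord, None, [::]).

Definition executed_before (ord : seq V) (u w : V) : bool :=
  [&& u \in ord, w \in ord & index u ord < index w ord].

Definition executed_right_after (ord : seq V) (u w : V) : bool :=
  [&& u \in ord, w \in ord & index w ord == (index u ord).+1].

End Defs.

(* Main.v *)
Require Import Defs.
Require Import Defs.
From mathcomp Require Import all_boot zify.
Require Import Defs.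
Set Implicit Arguments. Unset Strict Implicit. Unset Printing Implicit Defensive.

Lemma conn_last (T : finType) (r : rel T) a b :
  connect r a b -> a != b -> exists2 p, connect r a p & r p b.
Proof.
move=> /connectP [p Hp ->]; elim/last_ind: p Hp => [|p z IH] /=.
  by rewrite eqxx.
rewrite rcons_path last_rcons => /andP [Hp Hz] _.
exists (last a p) => //; apply/connectP; by exists p.
Qed.

Lemma conn_first (T : finType) (r : rel T) a b :
  connect r a b -> a != b -> exists2 q, r a q & connect r q b.
Proof.
move=> /connectP [[|q p] Hp ->] /=; first by rewrite eqxx.
move: Hp => /= /andP [Haq Hp] _; exists q => //; apply/connectP; by exists p.
Qed.

Section Graph.
Variables (V : finType) (G : fcomp V).
Hypothesis Hfp : future_parallel G.
Hypothesis Hst : structured_single_touch G.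

Local Notation E := (edge G).
Local Notation st := (same_thread G).

Lemma acyc u w : E u w -> ~~ connect E w u.
Proof. by case: Hfp => H _; apply: H. Qed.

Lemma no_cycle a b : connect E a b -> connect E b a -> a = b.
Proof.
move=> Hab Hba; case: (eqVneq a b) => // Hne.
have [q Haq Hqb] := conn_first Hab Hne.
by move: (acyc Haq); rewrite (connect_trans Hqb Hba).
Qed.

Lemma edge_neq a b : E a b -> a != b.
Proof. by move=> H; apply/eqP=> Eab; subst; move: (acyc H); rewrite connect0. Qed.

Definition mu (z : V) := #|[set a | connect E a z]|.

Lemma mu_lt a b : connect E a b -> a != b -> mu a < mu b.
Proof.
move=> Hab Hne; apply: proper_card; apply/properP; split.
  by apply/subsetP=> x; rewrite !inE => Hx; apply: connect_trans Hx Hab.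
exists b; rewrite !inE ?connect0 //; apply/negP=> Hba.
by move/eqP: Hne; apply; apply: no_cycle.
Qed.

Lemma wf_ind (P : V -> Prop) :
  (forall z, (forall a, connect E a z -> a != z -> P a) -> P z) -> forall z, P z.
Proof.
move=> IH z; have [n] := ubnP (mu z); elim: n z => // n IHn z Hz.
apply: IH => a Haz Hne; apply: IHn; exact: leq_trans (mu_lt Haz Hne) Hz.
Qed.

Definition mud (z : V) := #|[set a | connect E z a]|.

Lemma mud_lt a b : connect E a b -> a != b -> mud b < mud a.
Proof.
move=> Hab Hne; apply: proper_card; apply/properP; split.
  by apply/subsetP=> x; rewrite !inE => Hx; apply: connect_trans Hab Hx.
exists a; rewrite !inE ?connect0 //; apply/negP=> Hba.
by move/eqP: Hne; apply; apply: no_cycle.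
Qed.

Lemma wf_ind_d (P : V -> Prop) :
  (forall z, (forall a, connect E z a -> a != z -> P a) -> P z) -> forall z, P z.
Proof.
move=> IH z; have [n] := ubnP (mud z); elim: n z => // n IHn z Hz.
apply: IH => a Haz Hne; apply: IHn; refine (leq_trans (mud_lt Haz _) Hz).
by rewrite eq_sym.
Qed.

Lemma indeg_ax w : if w == root G then indeg G w = 0 else indeg G w \in [:: 1; 2].
Proof. by case: Hfp => _ [H _]; apply: H. Qed.
Lemma outdeg_ax w : if w == final G then outdeg G w = 0 else outdeg G w \in [:: 1; 2].
Proof. by case: Hfp => _ [_ [H _]]; apply: H. Qed.
Lemma cont_fun u w w' : cont G u w -> cont G u w' -> w = w'.
Proof. by case: Hfp => _ [_ [_ [H _]]]; apply: H. Qed.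
Lemma cont_inj u u' w : cont G u w -> cont G u' w -> u = u'.
Proof. by case: Hfp => _ [_ [_ [_ [H _]]]]; apply: H. Qed.
Lemma final_ax : in_main G (final G) /\ thread_last G (final G).
Proof. by case: Hfp => _ [_ [_ [_ [_ [H _]]]]]. Qed.
Lemma first_fork x : thread_first G x -> ~~ in_main G x ->
      exists v, fut G v x && ~~ same_thread G v x.
Proof. by case: Hfp => _ [_ [_ [_ [_ [_ [H _]]]]]]; apply: H. Qed.
Lemma fork_ax v f : fut G v f -> thread_first G f /\
      exists c, [/\ cont G v c, indeg G f = 1, indeg G c = 1,
                    ~~ is_touch G f & ~~ is_touch G c].
Proof. by case: Hfp => _ [_ [_ [_ [_ [_ [_ [H _]]]]]]]; apply: H. Qed.
Lemma last_ax y : thread_last G y -> ~~ in_main G y ->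
      outdeg G y = 1 /\ exists z, tch G y z && ~~ same_thread G y z.
Proof. by case: Hfp => _ [_ [_ [_ [_ [_ [_ [_ [H _]]]]]]]]; apply: H. Qed.
Lemma tch_ax y z : tch G y z -> ~~ in_main G y /\ ~~ same_thread G y z.
Proof. by case: Hfp => _ [_ [_ [_ [_ [_ [_ [_ [_ H]]]]]]]]; apply: H. Qed.

Lemma indeg_le2 w : indeg G w <= 2.
Proof. by have := indeg_ax w; case: (w == root G) => [->|]; rewrite // !inE => /orP [] /eqP ->. Qed.

Lemma outdeg_le2 w : outdeg G w <= 2.
Proof. by have := outdeg_ax w; case: (w == final G) => [->|]; rewrite // !inE => /orP [] /eqP ->. Qed.

Lemma in0 (A : {set V}) a : a \in A -> 0 < #|A|.
Proof. by move=> H; apply/card_gt0P; exists a. Qed.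
Lemma in1 (A : {set V}) a b : a \in A -> b \in A -> a != b -> 1 < #|A|.
Proof. by move=> Ha Hb Hab; apply/card_gt1P; exists a, b. Qed.

Lemma no_edge_root p : ~~ E p (root G).
Proof.
have := indeg_ax (root G); rewrite eqxx /indeg => H.
apply/negP => /or3P [] Hp.
- by have := in0 (A := [set u | cont G u (root G)]) (a := p); rewrite inE Hp; move/(_ isT); lia.
- by have := in0 (A := [set u | fut G u (root G)]) (a := p); rewrite inE Hp; move/(_ isT); lia.
- by have := in0 (A := [set u | tch G u (root G)]) (a := p); rewrite inE Hp; move/(_ isT); lia.
Qed.

Lemma st_refl a : st a a.
Proof. exact: connect0. Qed.
Lemma cs_sym : symmetric (cont_sym G).
Proof. by move=> a b; rewrite /cont_sym orbC. Qed.
Lemma st_sym a b : st a b -> st b a.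
Proof. by rewrite /same_thread (sym_connect_sym cs_sym). Qed.
Lemma st_trans a b d : st a b -> st b d -> st a d.
Proof. exact: connect_trans. Qed.
Lemma cont_st a b : cont G a b -> st a b.
Proof. by move=> H; apply: connect1; rewrite /cont_sym H. Qed.
Lemma ccont_st a b : connect (cont G) a b -> st a b.
Proof. by apply: connect_sub => x y H; apply: cont_st. Qed.
Lemma ccont_E a b : connect (cont G) a b -> connect E a b.
Proof. by apply: connect_sub => x y H; apply: connect1; rewrite /edge H. Qed.
Lemma cont_E a b : cont G a b -> E a b.
Proof. by move=> H; rewrite /edge H. Qed.
Lemma fut_E a b : fut G a b -> E a b.
Proof. by move=> H; rewrite /edge H orbT. Qed.
Lemma tch_E a b : tch G a b -> E a b.
Proof. by move=> H; rewrite /edge H !orbT. Qed.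

Lemma chain a b : st a b -> connect (cont G) a b \/ connect (cont G) b a.
Proof.
move/connectP=> [p Hp ->]; elim/last_ind: p Hp => [|p z IH] /=.
  by move=> _; left; apply: connect0.
rewrite rcons_path last_rcons => /andP [Hp Hz]; have := IH Hp.
set z0 := last a p in Hz *; rewrite /cont_sym in Hz.
case/orP: Hz => Hz [] H.
- by left; apply: connect_trans H (connect1 Hz).
- case: (eqVneq z0 a) => [E0|Hne].
    by left; rewrite -E0; apply: connect1.
  have [q Hq Hqa] := conn_first H Hne.
  by rewrite (cont_fun Hq Hz) in Hqa; right.
- case: (eqVneq a z0) => [E0|Hne].
    by right; rewrite E0; apply: connect1.
  have [q Haq Hq] := conn_last H Hne.
  by rewrite (cont_inj Hq Hz) in Haq; left.
- by right; apply: connect_trans (connect1 Hz) H.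
Qed.

Lemma first_conn a b : thread_first G a -> st a b -> connect (cont G) a b.
Proof.
move=> Ha /chain [] // H; case: (eqVneq b a) => [->|Hne]; first exact: connect0.
have [p _ Hp] := conn_last H Hne.
by move/forallP: Ha => /(_ p); rewrite Hp.
Qed.

Lemma last_conn a b : thread_last G b -> st a b -> connect (cont G) a b.
Proof.
move=> Hb /chain [] // H; case: (eqVneq b a) => [->|Hne]; first exact: connect0.
have [q Hq _] := conn_first H Hne.
by move/forallP: Hb => /(_ q); rewrite Hq.
Qed.

Lemma first_uniq a b : thread_first G a -> thread_first G b -> st a b -> a = b.
Proof.
move=> Ha Hb Hab; have H := first_conn Ha Hab.
case: (eqVneq a b) => // Hne; have [p _ Hp] := conn_last H Hne.
by move/forallP: Hb => /(_ p); rewrite Hp.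
Qed.

Lemma not_first z : ~~ thread_first G z -> exists p, cont G p z.
Proof.
by rewrite /thread_first negb_forall => /existsP [p]; rewrite negbK; exists p.
Qed.
Lemma not_last z : ~~ thread_last G z -> exists p, cont G z p.
Proof.
by rewrite /thread_last negb_forall => /existsP [p]; rewrite negbK; exists p.
Qed.

Lemma exists_first a : exists2 f, thread_first G f & connect (cont G) f a.
Proof.
elim/wf_ind: a => z IH; case Hf: (thread_first G z).
  by exists z => //; apply: connect0.
have [p Hp] := not_first (negbT Hf).
have [f Hf1 Hf2] := IH p (connect1 (cont_E Hp)) (edge_neq (cont_E Hp)).
by exists f => //; apply: connect_trans Hf2 (connect1 Hp).
Qed.

Lemma exists_last a : exists2 l, thread_last G l & connect (cont G) a l.
Proof.
elim/wf_ind_d: a => z IH; case Hf: (thread_last G z).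
  by exists z => //; apply: connect0.
have [p Hp] := not_last (negbT Hf).
have Hne : p != z by rewrite eq_sym edge_neq // cont_E.
have [l Hl1 Hl2] := IH p (connect1 (cont_E Hp)) Hne.
by exists l => //; apply: connect_trans (connect1 Hp) Hl2.
Qed.

Lemma root_first : thread_first G (root G).
Proof. by apply/forallP=> u; apply/negP=> H; move: (no_edge_root u); rewrite cont_E. Qed.

Lemma main_first a : in_main G a -> thread_first G a -> a = root G.
Proof. by move=> Ha Hf; apply: first_uniq Hf root_first (st_sym Ha). Qed.

Lemma in_main_st a b : in_main G a -> st a b -> in_main G b.
Proof. exact: st_trans. Qed.

Lemma fork_of a : ~~ in_main G a -> exists w f, fut G w f /\ st f a.
Proof.
move=> Ha; have [f Hf Hfa] := exists_first a.
have Hfm : ~~ in_main G f.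
  by apply: contra Ha => H; apply: in_main_st H (ccont_st Hfa).
have [w /andP [Hw _]] := first_fork Hf Hfm.
by exists w, f; split => //; apply: ccont_st.
Qed.

Lemma fut_first v f : fut G v f -> thread_first G f.
Proof. by case/fork_ax. Qed.

Lemma fut_nonmain v f : fut G v f -> ~~ in_main G f.
Proof.
move=> H; apply/negP=> Hm; have Hr := main_first Hm (fut_first H).
by move: (no_edge_root v); rewrite -Hr fut_E.
Qed.

Lemma fut_diff v f : fut G v f -> ~~ st v f.
Proof.
move=> H; apply/negP=> Hs; have := first_conn (fut_first H) (st_sym Hs).
by move/ccont_E=> Hc; move: (acyc (fut_E H)); rewrite Hc.
Qed.

Lemma fut_par_uniq v v' f : fut G v f -> fut G v' f -> v = v'.
Proof.
move=> H H'; have [_ [c [_ Hi _ _ _]]] := fork_ax H.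
case: (eqVneq v v') => // Hne; exfalso.
have := in1 (A := [set u | fut G u f]) (a := v) (b := v'); rewrite !inE H H' => /(_ isT isT Hne).
by move: Hi; rewrite /indeg; lia.
Qed.

Lemma fut_no_tch v f p : fut G v f -> ~~ tch G p f.
Proof.
move=> H; have [_ [c [_ Hi _ _ _]]] := fork_ax H; apply/negP=> Hp.
have := in0 (A := [set u | fut G u f]) (a := v); rewrite inE H => /(_ isT).
have := in0 (A := [set u | tch G u f]) (a := p); rewrite inE Hp => /(_ isT).
by move: Hi; rewrite /indeg; lia.
Qed.

Lemma fut_no_cont v f p : fut G v f -> ~~ cont G p f.
Proof. by move/fut_first/forallP. Qed.

Lemma rc_exists v f : fut G v f -> exists c, cont G v c.
Proof. by case/fork_ax=> _ [c [H _]]; exists c. Qed.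

Lemma rc_props v f c : fut G v f -> cont G v c -> indeg G c = 1 /\ ~~ is_touch G c.
Proof.
by move=> H Hc; have [_ [c0 [Hc0 _ Hi _ Ht]]] := fork_ax H; rewrite (cont_fun Hc Hc0).
Qed.

Lemma rc_par v f c p : fut G v f -> cont G v c -> E p c -> p = v.
Proof.
move=> H Hc; have [Hi _] := rc_props H Hc.
have := in0 (A := [set u | cont G u c]) (a := v); rewrite inE Hc => /(_ isT) Hc1.
case/or3P=> Hp.
- exact: cont_inj Hp Hc.
- have := in0 (A := [set u | fut G u c]) (a := p); rewrite inE Hp => /(_ isT).
  by move: Hi; rewrite /indeg; lia.
- have := in0 (A := [set u | tch G u c]) (a := p); rewrite inE Hp => /(_ isT).
  by move: Hi; rewrite /indeg; lia.
Qed.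

Lemma fut_child_uniq v f f' : fut G v f -> fut G v f' -> f = f'.
Proof.
move=> H H'; have [c Hc] := rc_exists H.
case: (eqVneq f f') => // Hne; exfalso.
have := in1 (A := [set u | fut G v u]) (a := f) (b := f'); rewrite !inE H H' => /(_ isT isT Hne).
have := in0 (A := [set u | cont G v u]) (a := c); rewrite inE Hc => /(_ isT).
by have := outdeg_le2 v; rewrite /outdeg; lia.
Qed.

Lemma fork_thread_uniq w1 f1 w2 f2 : fut G w1 f1 -> fut G w2 f2 -> st f1 f2 ->
  w1 = w2 /\ f1 = f2.
Proof.
move=> H1 H2 Hs; have Ef := first_uniq (fut_first H1) (fut_first H2) Hs.
by subst; split => //; apply: fut_par_uniq H1 H2.
Qed.

Lemma tch_has_cont y x : tch G y x -> exists u, cont G u x.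
Proof.
move=> H; apply: not_first; apply/negP=> Hf.
case Hm: (in_main G x).
  by move: (no_edge_root y); rewrite -(main_first Hm Hf) tch_E.
have [v /andP [Hv _]] := first_fork Hf (negbT Hm).
by move: (fut_no_tch y Hv); rewrite H.
Qed.

Lemma tch_par_uniq y1 y2 u x : tch G y1 x -> tch G y2 x -> cont G u x -> y1 = y2.
Proof.
move=> H1 H2 Hu; case: (eqVneq y1 y2) => // Hne; exfalso.
have := in1 (A := [set a | tch G a x]) (a := y1) (b := y2); rewrite !inE H1 H2 => /(_ isT isT Hne).
have := in0 (A := [set a | cont G a x]) (a := u); rewrite inE Hu => /(_ isT).
by have := indeg_le2 x; rewrite /indeg; lia.
Qed.

Lemma struct1 v f c : fut G v f -> cont G v c ->
  forall x y u, tch G y x -> cont G u x -> st y f -> ~~ st y x -> descendant G v u.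
Proof. by move=> H Hc; case: Hst => H1 _; case: (H1 v f c H Hc). Qed.

Lemma single_touch v f c : fut G v f -> cont G v c ->
  exists x, [/\ touch_of G f x, descendant G c x & forall x', touch_of G f x' -> x' = x].
Proof. by move=> H Hc; have [_ H2] := Hst; exact: (H2 v f c H Hc). Qed.

Lemma touch_ofI f y x : tch G y x -> st y f -> touch_of G f x.
Proof.
move=> H Hs; have [u Hu] := tch_has_cont H; have [_ Hd] := tch_ax H.
by exists y, u; rewrite H Hu Hs Hd.
Qed.

Lemma tch_last y x : tch G y x -> thread_last G y.
Proof.
move=> H; apply/negPn/negP=> Hnl; have [z Hz] := not_last Hnl.
have [Hm _] := tch_ax H.
have [l Hl Hyl] := exists_last y.
have Hly : l != y by apply/eqP=> E0; subst l; move/forallP: Hl => /(_ z); rewrite Hz.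
have Hlm : ~~ in_main G l by apply: contra Hm => Hm'; apply: in_main_st Hm' (st_sym (ccont_st Hyl)).
have [_ [z' /andP [Hz' _]]] := last_ax Hl Hlm.
have [w [f [Hw Hfy]]] := fork_of Hm.
have [c Hc] := rc_exists Hw.
have [X [_ _ Hu]] := single_touch Hw Hc.
have E1 := Hu _ (touch_ofI H (st_sym Hfy)).
have E2 := Hu _ (touch_ofI Hz' (st_trans (st_sym (ccont_st Hyl)) (st_sym Hfy))).
subst.
have [u Hu'] := tch_has_cont H.
by move/eqP: Hly; apply; apply: tch_par_uniq Hz' H Hu'.
Qed.

Definition cf : rel V := fun a b => cont G a b || fut G a b.

Lemma ccf_E a b : connect cf a b -> connect E a b.
Proof. by apply: connect_sub => x y /orP [] H; apply: connect1; [apply: cont_E|apply: fut_E]. Qed.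
Lemma ccont_cf a b : connect (cont G) a b -> connect cf a b.
Proof. by apply: connect_sub => x y H; apply: connect1; rewrite /cf H. Qed.

Lemma S1 f n : connect cf f n -> st f n \/
  exists w f', [/\ fut G w f', st f' n & connect cf f w].
Proof.
move/connectP=> [p Hp ->]; elim/last_ind: p Hp => [|p z IH] /=.
  by move=> _; left; apply: st_refl.
rewrite rcons_path last_rcons => /andP [Hp Hz]; have Hc : connect cf f (last f p).
  by apply/connectP; exists p.
case/orP: Hz => Hz.
- case: (IH Hp) => [H|[w [f' [Hw Hs Hc']]]].
    by left; apply: st_trans H (cont_st Hz).
  by right; exists w, f'; split => //; apply: st_trans Hs (cont_st Hz).
- by right; exists (last f p), z; split => //; apply: st_refl.
Qed.

Section D.
Variables (v f c : V).
Hypotheses (Hv : fut G v f) (Hc : cont G v c).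

Definition Disj z := st v z \/
   (exists w f', [/\ fut G w f', st f' z & connect E c w]) \/
   (exists w fV cV, [/\ fut G w fV, st fV v, cont G w cV & connect E cV z]).

Lemma Disj_tr a z : Disj a -> st a z -> connect E a z -> Disj z.
Proof.
move=> [H|[[w [f' [H1 H2 H3]]]|[w [fV [cV [H1 H2 H3 H4]]]]]] Hs Hc'.
- by left; apply: st_trans H Hs.
- by right; left; exists w, f'; split => //; apply: st_trans H2 Hs.
- by right; right; exists w, fV, cV; split => //; apply: connect_trans H4 Hc'.
Qed.

Lemma Dlem z : connect E c z -> Disj z.
Proof.
elim/wf_ind: z => z IH Hcz.
case: (eqVneq c z) => [<-|Hne]; first by left; apply: cont_st.
have [p Hcp Hpz] := conn_last Hcz Hne.
have Dp := IH p (connect1 Hpz) (edge_neq Hpz) Hcp.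
case/or3P: Hpz => Hpz.
- exact: Disj_tr Dp (cont_st Hpz) (connect1 (cont_E Hpz)).
- by right; left; exists p, z; split => //; apply: st_refl.
- have [Hpm Hpd] := tch_ax Hpz.
  case: Dp => [Hs|[[w [f' [H1 H2 H3]]]|[w [fV [cV [H1 H2 H3 H4]]]]]].
  + have Hvm : ~~ in_main G v by apply: contra Hpm => Hm; apply: in_main_st Hm Hs.
    have [wV [fV [HwV HfV]]] := fork_of Hvm.
    have [cV HcV] := rc_exists HwV.
    have [X [_ HX Hu]] := single_touch HwV HcV.
    have EX := Hu _ (touch_ofI Hpz (st_sym (st_trans HfV Hs))); subst X.
    by right; right; exists wV, fV, cV.
  + have [cw Hcw] := rc_exists H1.
    have [u Hu] := tch_has_cont Hpz.
    have Hwu := struct1 H1 Hcw Hpz Hu (st_sym H2) Hpd.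
    have Hcu : connect E c u := connect_trans H3 Hwu.
    have Du := IH u (connect1 (cont_E Hu)) (edge_neq (cont_E Hu)) Hcu.
    exact: Disj_tr Du (cont_st Hu) (connect1 (cont_E Hu)).
  + by right; right; exists w, fV, cV; split => //; apply: connect_trans H4 (connect1 (tch_E Hpz)).
Qed.
End D.

Lemma G2 v : forall f c, fut G v f -> cont G v c ->
  forall n, connect cf f n -> ~~ connect E c n.
Proof.
elim/wf_ind: v => v IHv f c Hv Hc n.
elim/wf_ind: n => n IHn Hfn; apply/negP=> Hcn.
have HfE : connect E f n := ccf_E Hfn.
case: (Dlem Hc Hcn) => [Hs|[[w [f' [H1 H2 H3]]]|[wV [fV [cV [H1 H2 H3 H4]]]]]].
- case: (S1 Hfn) => [Hs'|[w [f'' [Hw Hs'' Hc']]]].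
    by move: (fut_diff Hv); rewrite (st_trans Hs (st_sym Hs')).
  have H1 : connect E f'' v := ccont_E (first_conn (fut_first Hw) (st_trans Hs'' (st_sym Hs))).
  have H2 : connect E f v := connect_trans (ccf_E Hc') (connect_trans (connect1 (fut_E Hw)) H1).
  by move: (acyc (fut_E Hv)); rewrite H2.
- case: (S1 Hfn) => [Hs'|[w' [f'' [Hw Hs'' Hc']]]].
    have Ef := first_uniq (fut_first Hv) (fut_first H1) (st_trans Hs' (st_sym H2)); subst f'.
    have Ew := fut_par_uniq Hv H1; subst w.
    by move: (acyc (cont_E Hc)); rewrite H3.
  have [Ew Ef] := fork_thread_uniq H1 Hw (st_trans H2 (st_sym Hs'')); subst w' f''.
  have Hwn : connect E w n.
    exact: connect_trans (connect1 (fut_E H1)) (ccont_E (first_conn (fut_first H1) H2)).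
  have Hwn' : w != n.
    apply/eqP=> Ewn; subst n; move: (acyc (fut_E H1)).
    by rewrite (ccont_E (first_conn (fut_first H1) H2)).
  by move: (IHn w Hwn Hwn' Hc'); rewrite H3.
- have HfVv := first_conn (fut_first H1) H2.
  have Hwv : connect E wV v := connect_trans (connect1 (fut_E H1)) (ccont_E HfVv).
  have Hwv' : wV != v.
    by apply/eqP=> Ew; subst wV; move: (fut_diff H1); rewrite st_sym.
  have Hcf : connect cf fV n.
    apply: connect_trans (ccont_cf HfVv) _; apply: connect_trans _ Hfn.
    by apply: connect1; rewrite /cf Hv orbT.
  by move: (IHv wV Hwv Hwv' fV cV H1 H3 n Hcf); rewrite H4.
Qed.

Lemma G1 v f c n : fut G v f -> cont G v c -> st f n -> ~~ connect E c n.
Proof.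
move=> Hv Hc Hs; exact: (G2 Hv Hc (ccont_cf (first_conn (fut_first Hv) Hs))).
Qed.

Lemma reach_root a : connect cf (root G) a.
Proof.
elim/wf_ind: a => a IH; case Hf: (thread_first G a).
  case Hm: (in_main G a); first by rewrite (main_first Hm Hf); apply: connect0.
  have [v /andP [Hv _]] := first_fork Hf (negbT Hm).
  apply: connect_trans (IH v (connect1 (fut_E Hv)) (edge_neq (fut_E Hv))) _.
  by apply: connect1; rewrite /cf Hv orbT.
have [p Hp] := not_first (negbT Hf).
apply: connect_trans (IH p (connect1 (cont_E Hp)) (edge_neq (cont_E Hp))) _.
by apply: connect1; rewrite /cf Hp.
Qed.

Fixpoint Stk (z : V) (dq : seq V) : Prop :=
  match dq with
  | [::] => in_main G z
  | c' :: dq' => exists w f', [/\ fut G w f', cont G w c', st f' z & Stk c' dq']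
  end.

Lemma Stk_st a b dq : st a b -> Stk a dq -> Stk b dq.
Proof.
case: dq => [|c' dq] /= Hs; first by move=> H; apply: in_main_st H Hs.
by move=> [w [f' [H1 H2 H3 H4]]]; exists w, f'; split => //; apply: st_trans H3 Hs.
Qed.

Lemma Stk_rc z dq : Stk z dq -> forall n, n \in dq -> exists w f', fut G w f' /\ cont G w n.
Proof.
elim: dq z => [|c' dq IH] z //= [w [f' [H1 H2 H3 H4]]] n.
rewrite inE => /orP [/eqP ->|Hn]; first by exists w, f'.
exact: IH H4 n Hn.
Qed.

Definition Inv (s : state V) : Prop :=
  let: (o, cur, dq) := s in
  [/\ (uniq o /\ forall a p, a \in o -> E p a -> p \in o),
   (match cur with
    | Some z => [/\ z \notin o, (forall p, E p z -> p \in o) & Stk z dq]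
    | None => exists l, [/\ l \in o, thread_last G l & Stk l dq] end),
   (forall w f' c', fut G w f' -> cont G w c' -> (c' \in o \/ cur = Some c') ->
       forall a, st f' a -> a \in o),
   (forall q n, q \in o -> cf q n -> [\/ n \in o, cur = Some n | n \in dq]) &
   (uniq dq /\ forall n, n \in dq -> [/\ n \notin o, cur != Some n & forall p, E p n -> p \in o])].

Lemma anc_closed (o : seq V) : (forall a p, a \in o -> E p a -> p \in o) ->
  forall p a, connect E p a -> a \in o -> p \in o.
Proof.
move=> Hc p a /connectP [s Hs ->]; elim: s p Hs => [|q s IH] p //= /andP [Hpq Hs] Ha.
exact: Hc (IH q Hs Ha) Hpq.
Qed.

Lemma ready_P o n p : ready G o n -> E p n -> p \in o.
Proof. by move/forallP=> /(_ p) /implyP H /H. Qed.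

Lemma is_touchI y u n : tch G y n -> cont G u n -> is_touch G n.
Proof.
move=> Hy Hu; have [_ Hd] := tch_ax Hy.
by apply/existsP; exists y; apply/existsP; exists u; rewrite Hy Hu Hd.
Qed.

Lemma K1 o z dq n u : Inv (o, Some z, dq) -> tch G z n -> cont G u n -> u \notin rcons o z.
Proof.
move=> [[Hu1 Hcl] [Hz1 Hz2 Hz3] HD HE [Hq1 Hq2]] Hzn Hun.
rewrite mem_rcons inE; apply/negP=> /orP [/eqP Euz|Huo].
  subst u; have [_ Hd] := tch_ax Hzn; by move: Hd; rewrite cont_st.
case: (HE u n Huo); first by rewrite /cf Hun.
- by move=> Hn; move: Hz1; rewrite (Hcl n z Hn (tch_E Hzn)).
- by case=> Ezn; subst z; move: (edge_neq (tch_E Hzn)); rewrite eqxx.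
- move=> Hn; have [w [f' [Hw Hc]]] := Stk_rc Hz3 Hn.
  have [_ Ht] := rc_props Hw Hc.
  by move: Ht; rewrite (is_touchI Hzn Hun).
Qed.

Lemma cur_anc o z dq x : Inv (o, Some z, dq) -> connect E x z -> x != z -> x \in o.
Proof.
move=> [[Hu1 Hcl] [Hz1 Hz2 Hz3] HD HE HF] Hxz Hne.
have [p Hxp Hpz] := conn_last Hxz Hne.
have H := anc_closed Hcl Hxp; exact: H (Hz2 p Hpz).
Qed.

Lemma K2 o z dq n : Inv (o, Some z, dq) -> ~~ is_fork G z -> cont G z n ->
  forall p, E p n -> p \in rcons o z.
Proof.
move=> HI Hnf Hzn p; have HI' := HI.
move: HI => [[Hu1 Hcl] [Hz1 Hz2 Hz3] HD HE HF].
rewrite mem_rcons inE; case/or3P=> Hp.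
- by rewrite (cont_inj Hp Hzn) eqxx.
- by move: (fut_no_cont z Hp); rewrite Hzn.
- apply/orP; right.
  have [Hpm Hpd] := tch_ax Hp.
  have [w [f' [Hw Hfp']]] := fork_of Hpm.
  have [c' Hc'] := rc_exists Hw.
  have Hwz := struct1 Hw Hc' Hp Hzn (st_sym Hfp') Hpd.
  have Hwz' : w != z.
    by apply/eqP=> Ew; subst w; move: Hnf; rewrite /is_fork; case/existsP; exists f'.
  have Hwo := cur_anc HI' Hwz Hwz'.
  case Hco: (c' \in o); first by apply: HD Hw Hc' (or_introl Hco) p Hfp'.
  case: (eqVneq c' z) => [Ecz|Hcz].
    by rewrite Ecz in Hc'; apply: HD Hw Hc' (or_intror erefl) p Hfp'.
  exfalso.
  have [X [_ HX Hu]] := single_touch Hw Hc'.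
  have EX := Hu _ (touch_ofI Hp (st_sym Hfp')); subst X.
  have Hnc : c' != n.
    apply/eqP=> Ecn; subst n; have [_ Ht] := rc_props Hw Hc'.
    by move: Ht; rewrite (is_touchI Hp Hzn).
  have [p' Hcp' Hp'n] := conn_last HX Hnc.
  case/or3P: Hp'n => Hp'n.
  + rewrite (cont_inj Hp'n Hzn) in Hcp'.
    by move: Hco; rewrite (cur_anc HI' Hcp' Hcz).
  + by move: (fut_no_cont z Hp'n); rewrite Hzn.
  + rewrite (tch_par_uniq Hp'n Hp Hzn) in Hcp'.
    by move: (G1 Hw Hc' Hfp'); rewrite Hcp'.
Qed.

Lemma Inv_step s s' : Inv s -> step G s s' -> Inv s'.
Proof.
move=> HI Hs; case: Hs HI => [o x f c dq Hf Hc|o x c dq Hnf He Hr|o x dq Hnf Hnr|o y dq] HI.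
-
  have HI' := HI; move: HI => [[Hu1 Hcl] [Hz1 Hz2 Hz3] HD HE [Hq1 Hq2]].
  have Hfo : f \notin o by apply: contra Hz1 => H; apply: Hcl H (fut_E Hf).
  have Hco : c \notin o by apply: contra Hz1 => H; apply: Hcl H (cont_E Hc).
  have Hfx : f != x by rewrite eq_sym edge_neq // fut_E.
  have Hcx : c != x by rewrite eq_sym edge_neq // cont_E.
  have Hfc : f != c by apply/eqP=> Efc; subst; move: (fut_no_cont x Hf); rewrite Hc.
  split.
  + split; first by rewrite rcons_uniq Hz1.
    move=> a p; rewrite mem_rcons inE => /orP [/eqP ->|Ha] Hp; rewrite mem_rcons inE.
      by rewrite Hz2 ?orbT.
    by rewrite (Hcl a p Ha Hp) orbT.
  + split.
    * by rewrite mem_rcons inE negb_or Hfx.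
    * move=> p Hp; rewrite mem_rcons inE; apply/orP; left; apply/eqP.
      case/or3P: Hp => Hp.
      -- by move: (fut_no_cont p Hf); rewrite Hp.
      -- exact: fut_par_uniq Hp Hf.
      -- by move: (fut_no_tch p Hf); rewrite Hp.
    * exists x, f; split => //; first exact: st_refl.
      exact: Stk_st (cont_st Hc) Hz3.
  + move=> w f' c' Hw Hc' [Hin|Ecur] a Ha.
    * move: Hin; rewrite mem_rcons inE => /orP [/eqP Ec'|Hin]; rewrite mem_rcons inE.
        by subst c'; rewrite (HD w f' x Hw Hc' (or_intror erefl) a Ha) orbT.
      by rewrite (HD w f' c' Hw Hc' (or_introl Hin) a Ha) orbT.
    * case: Ecur => Ec'; subst c'.
      by move: (fut_no_cont w Hf); rewrite Hc'.
  + move=> q n; rewrite mem_rcons inE => /orP [/eqP ->|Hq] Hqn.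
    * case/orP: Hqn => Hqn.
        by apply: Or33; rewrite (cont_fun Hqn Hc) mem_head.
      by apply: Or32; rewrite (fut_child_uniq Hqn Hf).
    * case: (HE q n Hq Hqn) => [Hn|[En]|Hn].
      -- by apply: Or31; rewrite mem_rcons inE Hn orbT.
      -- by apply: Or31; rewrite mem_rcons inE En eqxx.
      -- by apply: Or33; rewrite inE Hn orbT.
  + split.
    * rewrite /= Hq1 andbT; apply/negP=> Hin.
      have [_ _ Hp] := Hq2 c Hin.
      by move: Hz1; rewrite (Hp x (cont_E Hc)).
    * move=> n; rewrite inE => /orP [/eqP ->|Hn].
      -- split.
         ++ by rewrite mem_rcons inE negb_or Hcx.
         ++ by apply/eqP=> [[Efc]]; move: Hfc; rewrite Efc eqxx.
         ++ move=> p Hp; rewrite (rc_par Hf Hc Hp) mem_rcons mem_head //.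
      -- have [Hn1 Hn2 Hn3] := Hq2 n Hn; split.
         ++ rewrite mem_rcons inE negb_or Hn1 andbT.
            by apply/eqP=> Enx; move: Hn2; rewrite Enx eqxx.
         ++ apply/eqP=> [[Efn]]; subst n.
            by move: Hz1; rewrite (Hn3 x (fut_E Hf)).
         ++ by move=> p Hp; rewrite mem_rcons inE (Hn3 p Hp) orbT.
-
  have HI' := HI; move: HI => [[Hu1 Hcl] [Hz1 Hz2 Hz3] HD HE [Hq1 Hq2]].
  have Hxc : cont G x c.
    case/or3P: He => // He.
      by move: Hnf; rewrite /is_fork; case/existsP; exists c.
    have [u Hu] := tch_has_cont He.
    by move: (K1 HI' He Hu); rewrite (ready_P Hr (cont_E Hu)).
  have Hco : c \notin o by apply: contra Hz1 => H; apply: Hcl H (cont_E Hxc).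
  have Hcx : c != x by rewrite eq_sym edge_neq // cont_E.
  split.
  + split; first by rewrite rcons_uniq Hz1.
    move=> a p; rewrite mem_rcons inE => /orP [/eqP ->|Ha] Hp; rewrite mem_rcons inE.
      by rewrite Hz2 ?orbT.
    by rewrite (Hcl a p Ha Hp) orbT.
  + split.
    * by rewrite mem_rcons inE negb_or Hcx.
    * by move=> p Hp; apply: ready_P Hr Hp.
    * exact: Stk_st (cont_st Hxc) Hz3.
  + move=> w f' c' Hw Hc' [Hin|Ecur] a Ha.
    * move: Hin; rewrite mem_rcons inE => /orP [/eqP Ec'|Hin]; rewrite mem_rcons inE.
        by subst c'; rewrite (HD w f' x Hw Hc' (or_intror erefl) a Ha) orbT.
      by rewrite (HD w f' c' Hw Hc' (or_introl Hin) a Ha) orbT.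
    * case: Ecur => Ec'; subst c'.
      have Ew := cont_inj Hc' Hxc; subst w.
      by move: Hnf; rewrite /is_fork; case/existsP; exists f'.
  + move=> q n; rewrite mem_rcons inE => /orP [/eqP ->|Hq] Hqn.
    * case/orP: Hqn => Hqn.
        by apply: Or32; rewrite (cont_fun Hqn Hxc).
      by move: Hnf; rewrite /is_fork; case/existsP; exists n.
    * case: (HE q n Hq Hqn) => [Hn|[En]|Hn].
      -- by apply: Or31; rewrite mem_rcons inE Hn orbT.
      -- by apply: Or31; rewrite mem_rcons inE En eqxx.
      -- by apply: Or33.
  + split => // n Hn; have [Hn1 Hn2 Hn3] := Hq2 n Hn; split.
    * rewrite mem_rcons inE negb_or Hn1 andbT.
      by apply/eqP=> Enx; move: Hn2; rewrite Enx eqxx.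
    * apply/eqP=> [[Ecn]]; subst n.
      by move: Hz1; rewrite (Hn3 x (cont_E Hxc)).
    * by move=> p Hp; rewrite mem_rcons inE (Hn3 p Hp) orbT.
-
  have HI' := HI; move: HI => [[Hu1 Hcl] [Hz1 Hz2 Hz3] HD HE [Hq1 Hq2]].
  have Hlast : thread_last G x.
    apply/negPn/negP=> Hnl; have [n Hn] := not_last Hnl.
    move/negP: (Hnr n (cont_E Hn)); apply.
    by apply/forallP=> p; apply/implyP=> Hp; apply: K2 HI' Hnf Hn p Hp.
  split.
  + split; first by rewrite rcons_uniq Hz1.
    move=> a p; rewrite mem_rcons inE => /orP [/eqP ->|Ha] Hp; rewrite mem_rcons inE.
      by rewrite Hz2 ?orbT.
    by rewrite (Hcl a p Ha Hp) orbT.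
  + by exists x; rewrite mem_rcons mem_head.
  + move=> w f' c' Hw Hc' [Hin|//] a Ha.
    move: Hin; rewrite mem_rcons inE => /orP [/eqP Ec'|Hin]; rewrite mem_rcons inE.
      by subst c'; rewrite (HD w f' x Hw Hc' (or_intror erefl) a Ha) orbT.
    by rewrite (HD w f' c' Hw Hc' (or_introl Hin) a Ha) orbT.
  + move=> q n; rewrite mem_rcons inE => /orP [/eqP ->|Hq] Hqn.
    * case/orP: Hqn => Hqn.
        by move/forallP: Hlast => /(_ n); rewrite Hqn.
      by move: Hnf; rewrite /is_fork; case/existsP; exists n.
    * case: (HE q n Hq Hqn) => [Hn|[En]|Hn].
      -- by apply: Or31; rewrite mem_rcons inE Hn orbT.
      -- by apply: Or31; rewrite mem_rcons inE En eqxx.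
      -- by apply: Or33.
  + split => // n Hn; have [Hn1 Hn2 Hn3] := Hq2 n Hn; split => //.
    * rewrite mem_rcons inE negb_or Hn1 andbT.
      by apply/eqP=> Enx; move: Hn2; rewrite Enx eqxx.
    * by move=> p Hp; rewrite mem_rcons inE (Hn3 p Hp) orbT.
-
  move: HI => [[Hu1 Hcl] [l [Hl Hll [w [f' [Hw Hwy Hfl Hyd]]]]] HD HE [Hq1 Hq2]].
  move: Hq1; rewrite /= => /andP [Hyq Hq1].
  have [Hy1 _ Hy3] := Hq2 y (mem_head _ _).
  split.
  + by split.
  + by split.
  + move=> w' f'' c' Hw' Hc' [Hin|[Ey]] a Ha.
      exact: HD w' f'' c' Hw' Hc' (or_introl Hin) a Ha.
    subst c'; have Ew := cont_inj Hc' Hwy; subst w'.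
    have Ef := fut_child_uniq Hw' Hw; subst f''.
    have Hal : connect (cont G) a l := last_conn Hll (st_trans (st_sym Ha) Hfl).
    have H := anc_closed Hcl (ccont_E Hal); exact: H Hl.
  + move=> q n Hq Hqn; case: (HE q n Hq Hqn) => [Hn|//|].
      by apply: Or31.
    rewrite inE => /orP [/eqP ->|Hn]; first by apply: Or32.
    by apply: Or33.
  + split => // n Hn; have Hn0 : n \in y :: dq by rewrite inE Hn orbT.
    have [Hn1 Hn2 Hn3] := Hq2 n Hn0; split => //.
    apply/eqP=> [[Eyn]]; subst n.
    by move: Hyq; rewrite Hn.
Qed.

Lemma Inv_init : Inv ([::], Some (root G), [::]).
Proof.
split => //.
- split => //; last exact: st_refl.
  by move=> p Hp; move: (no_edge_root p); rewrite Hp.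
- move=> w f' c' Hw Hc' [//|[Ec]]; subst c'.
  by move: (no_edge_root w); rewrite cont_E.
Qed.

Lemma Inv_steps s s' : steps G s s' -> Inv s -> Inv s'.
Proof. by elim=> // s1 s2 s3 H1 _ IH HI; apply: IH; apply: Inv_step HI H1. Qed.

Lemma complete ord : Inv (ord, None, [::]) -> forall a, a \in ord.
Proof.
move=> [[Hu Hcl] [l [Hl _ _]] _ HE _] a.
have Hr : root G \in ord.
  have H := anc_closed Hcl (ccf_E (reach_root l)); exact: H Hl.
have := reach_root a; move/connectP=> [p Hp ->]; elim: p (root G) Hr Hp => [|q p IH] x //= Hx /andP [Hxq Hp].
apply: IH Hp; case: (HE x q Hx Hxq) => //.
Qed.

End Graph.

Lemma steps_trans (V : finType) (G : fcomp V) s1 s2 s3 :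
  steps G s1 s2 -> steps G s2 s3 -> steps G s1 s3.
Proof. by elim=> // a b c H1 _ IH H; apply: steps_cons H1 (IH H). Qed.

Lemma step_ord (V : finType) (G : fcomp V) s s' :
  step G s s' -> exists r, s'.1.1 = s.1.1 ++ r.
Proof.
case=> [o x f c dq _ _|o x c dq _ _ _|o x dq _ _|o y dq] /=;
  [exists [:: x] | exists [:: x] | exists [:: x] | exists [::]]; by rewrite ?cats1 ?cats0.
Qed.

Lemma steps_ord (V : finType) (G : fcomp V) s s' :
  steps G s s' -> exists r, s'.1.1 = s.1.1 ++ r.
Proof.
elim=> [s0|a b c H1 _ [r Hr]]; first by exists [::]; rewrite cats0.
have [r1 Hr1] := step_ord H1; exists (r1 ++ r); by rewrite Hr Hr1 catA.
Qed.

Lemma step_Some (V : finType) (G : fcomp V) o z dq s' :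
  step G (o, Some z, dq) s' -> s'.1.1 = rcons o z.
Proof.
move=> H; inversion H; subst => //.
Qed.

Lemma steps_next (V : finType) (G : fcomp V) s fin :
  steps G s fin -> s <> fin -> exists2 s2, step G s s2 & steps G s2 fin.
Proof. by case=> [//|a b c H1 H2] _; exists b. Qed.

Lemma find_state (V : finType) (G : fcomp V) s fin a :
  steps G s fin -> a \in fin.1.1 -> a \notin s.1.1 ->
  exists o dq, steps G s (o, Some a, dq) /\ steps G (o, Some a, dq) fin.
Proof.
elim=> [s0|s1 s2 s3 H1 H2 IH] Ha Hna; first by move: Hna; rewrite Ha.
case Ha2: (a \in s2.1.1); last first.
  have [o [dq [Hx Hy]]] := IH Ha (negbT Ha2).
  by exists o, dq; split => //; apply: steps_cons H1 Hx.
have Hfound : forall o x dq, s1 = (o, Some x, dq) -> s2.1.1 = rcons o x ->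
    exists o0 dq0, steps G s1 (o0, Some a, dq0) /\ steps G (o0, Some a, dq0) s3.
  move=> o x dq E1 E2; move: Ha2 Hna; rewrite E2 E1 /= mem_rcons inE => /orP [/eqP Eax|Hao] Hna.
    subst a s1; exists o, dq; split; first exact: steps_refl.
    exact: steps_cons H1 H2.
  by move: Hna; rewrite Hao.
move: H1 Hfound Ha2 Hna; case=> [o x f c dq _ _|o x c dq _ _ _|o x dq _ _|o y dq] Hfound Ha2 Hna;
  try (by apply: (Hfound o x dq)).
by move: Hna; rewrite /= Ha2.
Qed.

Theorem mainTheorem1 (V : finType) (G : fcomp V) (ord : seq V) :
  future_parallel G -> structured_single_touch G -> seq_execution G ord ->
  forall (x y u v f c : V),
    (* x is a touch, with future parent y and local parent u *)
    tch G y x -> cont G u x -> ~~ same_thread G y x ->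
    (* v is the corresponding fork: its left child f starts the thread of y,
       and c is its right child *)
    fut G v f -> same_thread G f y -> cont G v c ->
    executed_before ord y u /\ executed_right_after ord y c.
Proof.
move=> Hfp Hst Hrun x y u v f c Hyx Hux Hsyx Hvf Hfy Hvc.
have HIF := Inv_steps Hfp Hst Hrun (Inv_init Hfp).
have Hall := complete Hfp HIF.
have [o [dq [Hs1 Hs2]]] := find_state Hrun (Hall y) (erefl true).
have HIy := Inv_steps Hfp Hst Hs1 (Inv_init Hfp).
have Hylast := tch_last Hfp Hst Hyx.
have [Hym _] := tch_ax Hfp Hyx.
have [s2 Hst2 Hs2'] := steps_next Hs2 (fun E => match E with erefl => I end).
have Es2 : s2 = (rcons o y, None, dq).
  move: Hst2; move Es: (o, Some y, dq) => s Hst2.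
  case: Hst2 Es => [o' x' f' c' dq' Hf' Hc'|o' x' c' dq' Hnf He Hr|o' x' dq' _ _|o' y' dq'] Es;
    case: Es => *; subst => //.
  - by move/forallP: Hylast => /(_ c'); rewrite Hc'.
  - exfalso; case/or3P: He => He.
    + by move/forallP: Hylast => /(_ c'); rewrite He.
    + by move: Hnf; rewrite /is_fork; case/existsP; exists c'.
    + have [u' Hu'] := tch_has_cont Hfp He.
      by move: (K1 Hfp HIy He Hu'); rewrite (ready_P Hr (cont_E Hu')).
subst s2.
have HIy0 := HIy.
move: HIy => [[Hu1 Hcl] [Hy1 Hy2 Hy3] HD HE [Hq1 Hq2]].
destruct dq as [|c' dq].
  by move: Hym; rewrite Hy3.
move: Hy3 => [w [f' [Hw Hwc Hfy' _]]].
have [Ew Ef] := fork_thread_uniq Hfp Hvf Hw (st_trans Hfy (st_sym Hfy')); subst w f'.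
have Ec := cont_fun Hfp Hwc Hvc; subst c'.
have [s3 Hst3 Hs3] := steps_next Hs2' (fun E => match E with erefl => I end).
have Es3 : s3 = (rcons o y, Some c, dq).
  move: Hst3; move Es: (rcons o y, None, c :: dq) => s Hst3.
  by case: Hst3 Es => // o' y' dq' [-> -> ->].
subst s3.
have Hs13 : steps G ([::], Some (root G), [::]) (rcons o y, Some c, dq).
  apply: steps_trans Hs1 _; apply: steps_cons Hst2 _; apply: steps_cons Hst3 _; exact: steps_refl.
have HIc := Inv_steps Hfp Hst Hs13 (Inv_init Hfp).
move: HIc => [_ [Hc1 _ _] _ _ _].
have [s4 Hst4 Hs4] := steps_next Hs3 (fun E => match E with erefl => I end).
have Eo4 := step_Some Hst4.
have [r Hr] := steps_ord Hs4.
rewrite Eo4 /= in Hr.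
have HIF' := HIF; move: HIF' => [[Huord _] _ _ _ _].
have Hu_no : u \notin rcons o y := K1 Hfp HIy0 Hyx Hux.
have Eord : ord = o ++ [:: y, c & r] by rewrite Hr -cats1 -cats1 -!catA.
move: Hc1; rewrite mem_rcons inE negb_or => /andP [Hcy Hco].
move: Hu_no; rewrite mem_rcons inE negb_or => /andP [Huy Huo].
split; apply/and3P; split; try exact: Hall.
- rewrite Eord !index_cat (negbTE Hy1) (negbTE Huo) /= eqxx eq_sym (negbTE Huy).
  by rewrite ltn_add2l.
- rewrite Eord !index_cat (negbTE Hy1) (negbTE Hco) /= eqxx; rewrite eq_sym in Hcy.
  by rewrite (negbTE Hcy) eqxx addn0 addn1.
Qed.
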